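(* Let $L$ be a finite-dimensional Lie algebra over a field $F$. 1. $L$ is primitive if and only if there exists a subalgebra $M$ of $L$ such that $L = M + A$ for every minimal ideal $A$ of $L$. 2. Let $L$ be primitive, let $U$ be a core-free maximal subalgebra of $L$ and let $A$ be a non-trivial ideal of $L$. Put $C = C_L(A)$. Then $C \cap U = 0$, and either $C = 0$ or $C$ is a minimal ideal of $L$. 3. If $L$ is primitive and $U$ is a core-free maximal subalgebra of $L$, then exactly one of the following holds: (a) $\mathrm{Soc}(L) = A$ is a self-centralising abelian minimal ideal of $L$ which is complemented by $U$, i.e. $L = U \dot{+} A$ (vector space direct sum); (b) $\mathrm{Soc}(L) = A$ is a non-abelian minimal ideal of $L$ which is supplemented by $U$, i.e. $L = U + A$, and in this case $C_L(A) = 0$; (c) $\mathrm{Soc}(L) = A \oplus B$, where $A$ and $B$ are the only two minimal ideals of $L$ and both are complemented by $U$, i.e. $L = A \dot{+} U = B \dot{+} U$; in this case $A = C_L(B)$, $B = C_L(A)$, and $A$, $B$ and $(A+B)\cap U$ are pairwise isomorphic non-abelian Lie algebras.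
   Context: All Lie algebras are finite-dimensional over a field $F$. For a subalgebra $U$ of $L$, the core $U_L$ is the largest ideal of $L$ contained in $U$; $U$ is core-free if $U_L = 0$. $L$ is called primitive if it has a core-free maximal subalgebra. $C_L(U) = \{x \in L : [x,U] = 0\}$. $\mathrm{Soc}(L)$ is the sum of all minimal ideals of $L$. An ideal $A$ is self-centralising if $C_L(A) = A$. *)

(* Defs.v *)
From HB Require Import structures.
From mathcomp Require Import all_boot all_algebra.
Set Implicit Arguments. Unset Strict Implicit. Unset Printing Implicit Defensive.
Import GRing.Theory.
Local Open Scope ring_scope.

Section Lie.
Variables (F : fieldType) (V : vectType F) (br : V -> V -> V).

Definition lie_axioms : Prop :=
  [/\ forall (a : F) (x y z : V), br (a *: x + y) z = a *: br x z + br y z,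
      forall (a : F) (x y z : V), br z (a *: x + y) = a *: br z x + br z y,
      forall x : V, br x x = 0 &
      forall x y z : V, br x (br y z) + br y (br z x) + br z (br x y) = 0].

Definition subalgebra (U : {vspace V}) : Prop :=
  forall x y, x \in U -> y \in U -> br x y \in U.

Definition ideal (I : {vspace V}) : Prop :=
  forall x y, y \in I -> br x y \in I.

(* U_L = 0 : the largest ideal contained in U is zero, i.e. every ideal
   contained in U is zero. *)
Definition core_free (U : {vspace V}) : Prop :=
  forall I : {vspace V}, ideal I -> (I <= U)%VS -> I = 0%VS.

Definition maximal_subalgebra (M : {vspace V}) : Prop :=
  [/\ subalgebra M, M != fullv &
      forall N : {vspace V}, subalgebra N -> (M <= N)%VS -> N = M \/ N = fullv].

Definition primitive : Prop :=
  exists U : {vspace V}, maximal_subalgebra U /\ core_free U.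

Definition minimal_ideal (A : {vspace V}) : Prop :=
  [/\ ideal A, A != 0%VS &
      forall B : {vspace V}, ideal B -> (B <= A)%VS -> B = 0%VS \/ B = A].

Definition centralizes (A : {vspace V}) (x : V) : Prop :=
  forall a, a \in A -> br x a = 0.

Definition is_centralizer (C A : {vspace V}) : Prop :=
  forall x, x \in C <-> centralizes A x.

Definition abelian (A : {vspace V}) : Prop :=
  forall x y, x \in A -> y \in A -> br x y = 0.

(* S = Soc(L): the sum of all minimal ideals, i.e. the smallest subspace
   containing every minimal ideal. *)
Definition is_socle (S : {vspace V}) : Prop :=
  (forall A, minimal_ideal A -> (A <= S)%VS) /\
  (forall W : {vspace V}, (forall A, minimal_ideal A -> (A <= W)%VS) -> (S <= W)%VS).

Definition lie_isomorphic (X Y : {vspace V}) : Prop :=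
  exists f : 'End(V),
    [/\ (f @: X)%VS = Y, (lker f :&: X)%VS = 0%VS &
        forall x y, x \in X -> y \in X -> f (br x y) = br (f x) (f y)].

Definition complemented_by (A U : {vspace V}) : Prop :=
  (U + A)%VS = fullv /\ (U :&: A)%VS = 0%VS.

End Lie.

(* Main.v *)
Require Import Defs.
From HB Require Import structures.
From mathcomp Require Import all_boot all_algebra.
From Stdlib Require Import Classical.
From mathcomp Require Import zify.
Set Implicit Arguments. Unset Strict Implicit. Unset Printing Implicit Defensive.
Import GRing.Theory.
Local Open Scope ring_scope.

Section S.
Variables (F : fieldType) (V : vectType F) (br : V -> V -> V).
Hypothesis HL : lie_axioms br.

Lemma brDl x y z : br (x + y) z = br x z + br y z.
Proof. by case: HL => h _ _ _; have := h 1 x y z; rewrite !scale1r. Qed.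
Lemma brDr x y z : br z (x + y) = br z x + br z y.
Proof. by case: HL => _ h _ _; have := h 1 x y z; rewrite !scale1r. Qed.
Lemma br0l z : br 0 z = 0.
Proof. have h := brDl 0 0 z; rewrite addr0 in h; apply: (addrI (br 0 z)); by rewrite addr0 -h. Qed.
Lemma br0r z : br z 0 = 0.
Proof. have h := brDr 0 0 z; rewrite addr0 in h; apply: (addrI (br z 0)); by rewrite addr0 -h. Qed.
Lemma brZl a x z : br (a *: x) z = a *: br x z.
Proof. by case: HL => h _ _ _; rewrite -(addr0 (a *: x)) h br0l addr0. Qed.
Lemma brZr a x z : br z (a *: x) = a *: br z x.
Proof. by case: HL => _ h _ _; rewrite -(addr0 (a *: x)) h br0r addr0. Qed.
Lemma brxx x : br x x = 0. Proof. by case: HL. Qed.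
Lemma brC x y : br x y = - br y x.
Proof.
apply/eqP; rewrite -subr_eq0 opprK.
have := brxx (x + y); rewrite brDl !brDr !brxx add0r addr0 => ->; done.
Qed.
Lemma brNl x z : br (- x) z = - br x z.
Proof. by rewrite -scaleN1r brZl scaleN1r. Qed.
Lemma brNr x z : br z (- x) = - br z x.
Proof. by rewrite -scaleN1r brZr scaleN1r. Qed.
Lemma brBl x y z : br (x - y) z = br x z - br y z.
Proof. by rewrite brDl brNl. Qed.
Lemma brBr x y z : br z (x - y) = br z x - br z y.
Proof. by rewrite brDr brNr. Qed.
Lemma jacobi x y z : br x (br y z) + br y (br z x) + br z (br x y) = 0.
Proof. by case: HL. Qed.

Lemma adr_lin a : linear (fun x => br x a).
Proof. by move=> c x y; rewrite brDl brZl. Qed.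
Lemma adl_lin a : linear (br a).
Proof. by move=> c x y; rewrite brDr brZr. Qed.
Definition adr a := fun x => br x a.
HB.instance Definition _ a := GRing.isLinear.Build F V V *:%R (adr a) (adr_lin a).
Definition adl a := br a.
HB.instance Definition _ a := GRing.isLinear.Build F V V *:%R (adl a) (adl_lin a).

Definition cent (A : {vspace V}) : {vspace V} :=
  (\bigcap_(i < \dim A) lker (linfun (adr (vbasis A)`_i)))%VS.

Lemma cent_spec A : is_centralizer br (cent A) A.
Proof.
move=> x; split.
- move=> Hx a Ha; rewrite (coord_vbasis Ha).
  have -> : br x (\sum_(i < \dim A) coord (vbasis A) i a *: (vbasis A)`_i)
     = adl x (\sum_(i < \dim A) coord (vbasis A) i a *: (vbasis A)`_i) by [].
  rewrite linear_sum big1 // => i _; rewrite linearZ /=.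
  move: Hx; rewrite memvE => /subv_bigcapP /(_ i isT).
  rewrite -memvE memv_ker lfunE /= /adr => /eqP h; by rewrite /adl h scaler0.
- move=> Hc; rewrite memvE; apply/subv_bigcapP => i _.
  rewrite -memvE memv_ker lfunE /= /adr Hc //.
  case: (ltnP i (size (vbasis A))) => [hi|hi]; first by apply: vbasis_mem; apply: mem_nth.
  by rewrite nth_default // mem0v.
Qed.

Lemma ideal_r I x y : ideal br I -> y \in I -> br y x \in I.
Proof. by move=> hI hy; rewrite brC memvN hI. Qed.

Lemma ideal_add I J : ideal br I -> ideal br J -> ideal br (I + J)%VS.
Proof.
move=> hI hJ x y /memv_addP [u hu [v hv ->]].
by rewrite brDr memv_add ?hI ?hJ.
Qed.

Lemma ideal_cap I J : ideal br I -> ideal br J -> ideal br (I :&: J)%VS.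
Proof.
by move=> hI hJ x y /memv_capP [h1 h2]; rewrite memv_cap hI ?hJ.
Qed.

Lemma subalg_add U A : subalgebra br U -> ideal br A -> subalgebra br (U + A)%VS.
Proof.
move=> hU hA x y /memv_addP [u hu [a ha ->]] /memv_addP [u' hu' [a' ha' ->]].
rewrite brDl !brDr -!addrA; apply: memv_add; first exact: hU.
by apply: memvD; [apply: hA | apply: memvD; [apply: ideal_r | apply: hA]].
Qed.

Lemma ideal_centr C A : ideal br A -> is_centralizer br C A -> ideal br C.
Proof.
move=> hA hC x y /hC hy; apply/hC => a ha.
have := jacobi x y a; rewrite hy // br0r add0r.
have -> : br y (br a x) = 0 by apply: (hy); apply: ideal_r.
by rewrite add0r => /eqP; rewrite brC oppr_eq0 => /eqP.
Qed.

Lemma dim_lt (B I : {vspace V}) : (B <= I)%VS -> B != I -> (\dim B < \dim I)%N.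
Proof.
move=> hs hn; rewrite ltnNge; apply/negP => hd; move/negP: hn; apply.
by rewrite eqEdim hs.
Qed.

Lemma min_ideal_exists I : ideal br I -> I != 0%VS ->
  exists A, minimal_ideal br A /\ (A <= I)%VS.
Proof.
move: {2}(\dim I) (leqnn (\dim I)) => n; elim: n I => [|n IH] I hn hI hI0.
  by move: hI0; rewrite -dimv_eq0; move: hn; rewrite leqn0 => ->.
case: (classic (minimal_ideal br I)) => [hm|hm]; first by exists I; split; rewrite ?subvv.
have [B [hB hB0 hBI hBn]] : exists B, [/\ ideal br B, B != 0%VS, (B <= I)%VS & B != I].
  apply: NNPP => hne; apply: hm; split => // B hB hBI.
  case: (eqVneq B 0%VS) => [->|h0]; first by left.
  case: (eqVneq B I) => [->|hn']; first by right.
  by exfalso; apply: hne; exists B.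
have [A [hA hAB]] := IH B (leq_trans (dim_lt hBI hBn) hn) hB hB0.
by exists A; split => //; apply: subv_trans hBI.
Qed.

Lemma max_sub_exists N : subalgebra br N -> N != fullv ->
  exists U, maximal_subalgebra br U /\ (N <= U)%VS.
Proof.
move: {2}(\dim (fullv : {vspace V}) - \dim N)%N (leqnn (\dim (fullv : {vspace V}) - \dim N)) => n.
elim: n N => [|n IH] N hn hN hNf.
  exfalso; move/negP: hNf; apply; rewrite eqEdim subvf.
  by move: hn; rewrite leqn0 subn_eq0.
case: (classic (maximal_subalgebra br N)) => [hm|hm]; first by exists N; split; rewrite ?subvv.
have [M [hM hMf hNM hMN]] : exists M, [/\ subalgebra br M, M != fullv, (N <= M)%VS & M != N].
  apply: NNPP => hne; apply: hm; split => // M hM hNM.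
  case: (eqVneq M N) => [->|h0]; first by left.
  case: (eqVneq M fullv) => [->|hn']; first by right.
  by exfalso; apply: hne; exists M.
have hlt := dim_lt hNM (introN eqP (fun e => (negP hMN) (introT eqP (esym e)))).
have hMfull : (\dim M <= \dim (fullv : {vspace V}))%N by apply: dimvS; apply: subvf.
have [U [hU hMU]] := IH M ltac:(move: hn hlt hMfull; lia) hM hMf.
by exists U; split => //; apply: subv_trans hMU.
Qed.

Lemma eq0_mem (W : {vspace V}) : (forall x, x \in W -> x = 0) -> W = 0%VS.
Proof. by move=> h; apply/eqP; rewrite -subv0; apply/subvP => x /h ->; rewrite mem0v. Qed.

Section Prim.
Variable U : {vspace V}.
Hypotheses (hU : maximal_subalgebra br U) (hcf : core_free br U).

Lemma supp A : ideal br A -> A != 0%VS -> (U + A)%VS = fullv.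
Proof.
move=> hA hA0; case: hU => hs _ hmax.
case: (hmax (U + A)%VS (subalg_add hs hA) (addvSl _ _)) => // e.
move/negP: hA0; case; apply/eqP; apply: hcf => //.
by rewrite -e addvSr.
Qed.

Lemma part2 A C : ideal br A -> A != 0%VS -> is_centralizer br C A ->
  (C :&: U)%VS = 0%VS /\ (C = 0%VS \/ minimal_ideal br C).
Proof.
move=> hA hA0 hC; have hCi := ideal_centr hA hC.
have hs : subalgebra br U by case: hU.
have hCU : (C :&: U)%VS = 0%VS.
  apply: hcf; last exact: capvSr.
  move=> x y /memv_capP [yC yU].
  have : x \in (U + A)%VS by rewrite supp // memvf.
  case/memv_addP => u hu [a ha ->].
  rewrite brDl (brC a y) (proj1 (hC y) yC a ha) oppr0 addr0.
  by rewrite memv_cap hCi // hs.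
split => //.
case: (eqVneq C 0%VS) => [->|hC0]; [by left | right].
split => // D hD hDC.
case: (eqVneq D 0%VS) => [->|hD0]; [by left | right].
apply/eqP; rewrite eqEsubv hDC /=; apply/subvP => x xC.
have : x \in (U + D)%VS by rewrite supp // memvf.
case/memv_addP => u hu [d hd ex].
have : u \in (C :&: U)%VS.
  rewrite memv_cap hu andbT.
  have -> : u = x - d by rewrite ex addrK.
  by rewrite memvB // (subvP hDC).
by rewrite hCU memv0 => /eqP hu0; rewrite ex hu0 add0r.
Qed.

End Prim.

Lemma distinct_min A B : minimal_ideal br A -> minimal_ideal br B -> A != B ->
  (A :&: B)%VS = 0%VS /\ (forall a b, a \in A -> b \in B -> br a b = 0).
Proof.
move=> [hA hA0 mA] [hB hB0 mB] hAB.
have hc : (A :&: B)%VS = 0%VS.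
  case: (mA _ (ideal_cap hA hB) (capvSl _ _)) => // e.
  have : (A <= B)%VS by rewrite -e capvSr.
  case/(mB _ hA) => e'; [by rewrite e' eqxx in hA0 | by rewrite e' eqxx in hAB].
split => // a b ha hb; apply/eqP; rewrite -memv0 -hc memv_cap.
by rewrite (ideal_r _ hA) // hB.
Qed.

Lemma socle_uniq S1 S2 : is_socle br S1 -> is_socle br S2 -> S1 = S2.
Proof. by move=> [h1 h1'] [h2 h2']; apply: subv_anti; rewrite h1' // h2'. Qed.

Section Iso.
Variables U X Y : {vspace V}.
Hypotheses (hs : subalgebra br U) (hX : ideal br X) (hY : ideal br Y)
  (hXY : (X :&: Y)%VS = 0%VS) (bXY : forall a b, a \in X -> b \in Y -> br a b = 0)
  (cUY : (U :&: Y)%VS = 0%VS) (sUY : (U + Y)%VS = fullv)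
  (cUX : (U :&: X)%VS = 0%VS) (sUX : (U + X)%VS = fullv).

Let p := daddv_pi Y U.
Let cYU : (Y :&: U)%VS = 0%VS. Proof. by rewrite capvC. Qed.
Lemma pY v : p v \in Y. Proof. exact: memv_pi. Qed.
Lemma pid y : y \in Y -> p y = y. Proof. exact: daddv_pi_id cYU. Qed.
Lemma pU v : v - p v \in U.
Proof.
have hv : v \in (Y + U)%VS by rewrite addvC sUY memvf.
have e := daddv_pi_add cYU hv.
have -> : v - p v = daddv_pi U Y v by rewrite /p -{1}e addrC addKr.
exact: memv_pi.
Qed.
Lemma p0 u : u \in U -> p u = 0.
Proof.
move=> hu; have hv : u \in (Y + U)%VS by rewrite addvC sUY memvf.
have e := daddv_pi_add cYU hv.
rewrite (daddv_pi_id cUY hu) in e.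
by apply: (addIr u); rewrite add0r.
Qed.
Lemma pD v w : p (v + w) = p v + p w. Proof. exact: raddfD. Qed.
Lemma pN v : p (- v) = - p v. Proof. exact: raddfN. Qed.

Lemma key a a' : a \in X -> a' \in X -> p (br a a') = - br (p a) (p a').
Proof.
move=> ha ha'.
have ht : br (a - p a) (a' - p a') \in U by apply: hs; apply: pU.
have e : br (a - p a) (a' - p a') = br a a' + br (p a) (p a').
  rewrite brBl !brBr (bXY ha (pY _)) (brC (p a) a') (bXY ha' (pY _)).
  by rewrite oppr0 !addr0 add0r opprK.
move: (p0 ht); rewrite e pD (pid (hY _ (pY _))).
by move/eqP; rewrite addr_eq0 => /eqP.
Qed.

Lemma iso_XY : lie_isomorphic br X Y.
Proof.
exists (- p); split.
- apply/eqP; rewrite eqEsubv; apply/andP; split; apply/subvP => v.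
    by case/memv_imgP => x hx ->; rewrite opp_lfunE memvN pY.
  move=> hv; have : v \in (U + X)%VS by rewrite sUX memvf.
  case/memv_addP => u hu [a ha ev]; apply/memv_imgP; exists (- a); first by rewrite memvN.
  by rewrite opp_lfunE pN opprK -(pid hv) ev pD p0 // add0r.
- apply: eq0_mem => x /memv_capP [hk hx]; move: hk; rewrite memv_ker opp_lfunE oppr_eq0 => /eqP hp.
  have : x \in (U :&: X)%VS by rewrite memv_cap hx andbT -[x]subr0 -hp pU.
  by rewrite cUX memv0 => /eqP.
- by move=> x y hx hy; rewrite !opp_lfunE key // opprK brNl brNr opprK.
Qed.

Lemma iso_XW : lie_isomorphic br X ((X + Y) :&: U)%VS.
Proof.
exists (\1%VF - p); split.
- apply/eqP; rewrite eqEsubv; apply/andP; split; apply/subvP => v.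
    case/memv_imgP => x hx ->; rewrite add_lfunE opp_lfunE id_lfunE memv_cap pU andbT.
    by rewrite memv_add // memvN pY.
  case/memv_capP => /memv_addP [a ha [b hb ev]] hv; apply/memv_imgP; exists a => //.
  rewrite add_lfunE opp_lfunE id_lfunE.
  have := p0 hv; rewrite ev pD (pid hb) => /eqP; rewrite addr_eq0 => /eqP ->.
  by rewrite opprK.
- apply: eq0_mem => x /memv_capP [hk hx]; move: hk.
  rewrite memv_ker add_lfunE opp_lfunE id_lfunE subr_eq0 => /eqP hp.
  have : x \in (X :&: Y)%VS by rewrite memv_cap hx hp pY.
  by rewrite hXY memv0 => /eqP.
- move=> x y hx hy; rewrite !add_lfunE !opp_lfunE !id_lfunE key //.
  rewrite brBl !brBr (bXY hx (pY _)) (brC (p x) y) (bXY hy (pY _)).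
  by rewrite oppr0 !addr0 add0r.
Qed.
End Iso.

Lemma socle_min S A : is_socle br S -> minimal_ideal br S -> minimal_ideal br A -> A = S.
Proof.
move=> [h1 _] [_ _ mS] hA; case: (mS A) => //; try by case: hA.
  by apply: h1.
by move=> e; case: hA => _; rewrite e eqxx.
Qed.

Lemma iso_abel X Y : ideal br X -> lie_isomorphic br X Y -> abelian br Y -> abelian br X.
Proof.
move=> hX [f [eY hk hom]] hab x y hx hy.
have : br x y \in (lker f :&: X)%VS.
  rewrite memv_cap hX // andbT memv_ker hom // hab //; rewrite -eY; exact: memv_img.
by rewrite hk memv0 => /eqP.
Qed.

Lemma other_cent U X Y : maximal_subalgebra br U -> core_free br U ->
  minimal_ideal br X -> minimal_ideal br Y -> X != Y -> Y = cent X.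
Proof.
move=> hU hcf mX mY hXY.
have [_ bXY] := distinct_min mX mY hXY.
have sY : (Y <= cent X)%VS.
  apply/subvP => y hy; apply/(cent_spec X y) => a ha.
  by rewrite brC bXY // oppr0.
case: mX => hX hX0 _.
have [_ []] := part2 hU hcf hX hX0 (cent_spec X).
  move=> e; rewrite e subv0 in sY; by case: mY => _; rewrite sY.
case=> _ _ mC; case: mY => hY hY0 _.
by case: (mC Y hY sY) => // e; rewrite e eqxx in hY0.
Qed.

Lemma nonab_other U X Y : maximal_subalgebra br U -> core_free br U ->
  minimal_ideal br X -> minimal_ideal br Y -> X != Y -> ~ abelian br X.
Proof.
move=> hU hcf mX mY hXY hab.
have eY := other_cent hU hcf mX mY hXY.
have sX : (X <= Y)%VS.
  rewrite eY; apply/subvP => x hx; apply/(cent_spec X x) => a ha; exact: hab.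
case: mY => _ _ mY'; case: (mY' X) => //; first by case: mX.
  by move=> e; case: mX => _; rewrite e eqxx.
by move=> e; rewrite e eqxx in hXY.
Qed.
End S.
Unset Implicit Arguments.
Theorem theorem1p1 (F : fieldType) (V : vectType F) (br : V -> V -> V)
    (HL : lie_axioms br) :
  (* 1 *)
  (primitive br <->
     exists M : {vspace V}, [/\ subalgebra br M, M != fullv &
       forall A, minimal_ideal br A -> (M + A)%VS = fullv])
  /\
  (* 2 *)
  (forall U A C : {vspace V},
     primitive br -> maximal_subalgebra br U -> core_free br U ->
     ideal br A -> A != 0%VS -> is_centralizer br C A ->
     (C :&: U)%VS = 0%VS /\ (C = 0%VS \/ minimal_ideal br C))
  /\
  (* 3 *)
  (forall U : {vspace V},
     primitive br -> maximal_subalgebra br U -> core_free br U ->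
     let Pa := exists A : {vspace V},
         [/\ is_socle br A, minimal_ideal br A, abelian br A,
             is_centralizer br A A & complemented_by A U] in
     let Pb := exists A : {vspace V},
         [/\ is_socle br A, minimal_ideal br A, ~ abelian br A,
             (U + A)%VS = fullv & is_centralizer br 0%VS A] in
     let Pc := exists A B : {vspace V},
         [/\ [/\ is_socle br (A + B)%VS, (A :&: B)%VS = 0%VS,
                 minimal_ideal br A, minimal_ideal br B & A != B],
             (forall D, minimal_ideal br D -> D = A \/ D = B),
             complemented_by A U /\ complemented_by B U,
             is_centralizer br A B /\ is_centralizer br B A &
             [/\ ~ abelian br A, ~ abelian br B, ~ abelian br ((A + B) :&: U)%VS &
                 [/\ lie_isomorphic br A B, lie_isomorphic br A ((A + B) :&: U)%VS &
                     lie_isomorphic br B ((A + B) :&: U)%VS]]] in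
     (Pa \/ Pb \/ Pc) /\ ~ (Pa /\ Pb) /\ ~ (Pa /\ Pc) /\ ~ (Pb /\ Pc)).
Proof.
split.
  split.
    case=> U [hU hcf]; exists U; case: (hU) => hs hUf _; split => // A [hA hA0 _].
    by have := supp HL hU hcf hA hA0.
  case=> M [hM hMf hMA]; have [U [hU hMU]] := max_sub_exists hM hMf.
  exists U; split => // I hI hIU; case: (eqVneq I 0%VS) => // hI0.
  have [A [hAm hAI]] := min_ideal_exists hI hI0.
  exfalso; case: hU => hs hUf _; move/negP: hUf; apply.
  rewrite eqEsubv subvf /= -(hMA A hAm) subv_add hMU /=.
  exact: subv_trans hAI hIU.
split.
  move=> U A C _ hU hcf hA hA0 hC; by have := part2 HL hU hcf hA hA0 hC.
move=> U _ hU hcf; cbv zeta.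
have hs : subalgebra br U by case: hU.
have hfi : ideal br (fullv : {vspace V}) by move=> x y _; rewrite memvf.
have hf0 : (fullv : {vspace V}) != 0%VS.
  apply/negP; rewrite -subv0 => h0; case: hU => _ /negP hUf _; apply: hUf.
  by rewrite eqEsubv subvf (subv_trans h0 (sub0v U)).
have [A0 [mA0 _]] := min_ideal_exists hfi hf0.
split; last first.
  split.
    case=> [[A [sA mA abA _ _]] [B [sB mB nB _ _]]].
    by rewrite (socle_uniq sA sB) in abA.
  split.
    case=> [[S [sS mS _ _ _]] [A [B [[sAB _ mA mB nAB] _ _ _ _]]]].
    by rewrite (socle_min sS mS mA) (socle_min sS mS mB) eqxx in nAB.
  case=> [[S [sS mS _ _ _]] [A [B [[sAB _ mA mB nAB] _ _ _ _]]]].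
  by rewrite (socle_min sS mS mA) (socle_min sS mS mB) eqxx in nAB.
case: (classic (exists B, minimal_ideal br B /\ B != A0)) => [[B0 [mB0 hBA]]|hno].
  right; right.
  have hAB : A0 != B0 by rewrite eq_sym.
  have eB := other_cent HL hU hcf mA0 mB0 hAB.
  have eA := other_cent HL hU hcf mB0 mA0 hBA.
  have [cAB bAB] := distinct_min HL mA0 mB0 hAB.
  have [cBA bBA] := distinct_min HL mB0 mA0 hBA.
  have hall : forall D, minimal_ideal br D -> D = A0 \/ D = B0.
    move=> D mD; case: (eqVneq D A0) => [->|hDA]; first by left.
    right; rewrite eB; have h := other_cent HL hU hcf mA0 mD.
    by rewrite {1}h // eq_sym.
  case: (mA0) => hA0 hA00 _; case: (mB0) => hB0 hB00 _.
  have sUA := supp HL hU hcf hA0 hA00.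
  have sUB := supp HL hU hcf hB0 hB00.
  have cUA : (U :&: A0)%VS = 0%VS.
    by rewrite capvC {1}eA; case: (part2 HL hU hcf hB0 hB00 (cent_spec HL B0)).
  have cUB : (U :&: B0)%VS = 0%VS.
    by rewrite capvC {1}eB; case: (part2 HL hU hcf hA0 hA00 (cent_spec HL A0)).
  have nA := nonab_other HL hU hcf mA0 mB0 hAB.
  have nB := nonab_other HL hU hcf mB0 mA0 hBA.
  have iAB := iso_XY HL hs hB0 bAB cUB sUB cUA sUA.
  have iAW := iso_XW HL hs hB0 cAB bAB cUB sUB.
  have iBW := iso_XW HL hs hA0 cBA bBA cUA sUA.
  rewrite addvC in iBW.
  exists A0, B0; split => //.
  - split => //; split.
      by move=> D /hall [->|->]; rewrite ?addvSl ?addvSr.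
    by move=> W hW; rewrite subv_add !hW.
  - by split; [rewrite {1}eA | rewrite {1}eB]; apply: cent_spec.
  - split => //.
    by move=> hab; apply: nA; apply: iso_abel hA0 iAW hab.
have hall : forall D, minimal_ideal br D -> D = A0.
  move=> D mD; apply/eqP; apply: NNPP => hn; apply: hno; exists D; split => //.
  by apply/negP.
have sA : is_socle br A0.
  split; first by move=> D /hall ->.
  by move=> W hW; apply: hW.
case: (mA0) => hA0 hA00 _.
have [cCU hC] := part2 HL hU hcf hA0 hA00 (cent_spec HL A0).
have sUA := supp HL hU hcf hA0 hA00.
case: (classic (abelian br A0)) => hab.
  left; exists A0.
  have sAC : (A0 <= cent br A0)%VS.
    by apply/subvP => x hx; apply/(cent_spec HL A0 x) => a ha; apply: hab.
  have eC : cent br A0 = A0.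
    case: hC => [e|mC]; last exact: hall.
    by rewrite e subv0 in sAC; rewrite sAC in hA00.
  split => //; first by rewrite -{1}eC; apply: cent_spec.
  by split => //; rewrite capvC -{1}eC.
right; left; exists A0.
have eC : cent br A0 = 0%VS.
  case: hC => // mC; exfalso; apply: hab => x y hx hy.
  have := hall _ mC => e; rewrite -e in hx.
  by have := (proj1 (cent_spec HL A0 x) hx y hy).
split => //; rewrite -eC; exact: cent_spec.
Qed.
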